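(* Every approximant $A\in\mathcal A$ is in normal form with respect to the $\mathsf v$-reduction extended to $\Lambda_\bot$.
   Context: $\Lambda_\bot$ is the set of $\lambda$-terms possibly containing a constant $\bot$: $M::=V\mid MN$, with values $V::=\bot\mid x\mid\lambda x.M$, up to $\alpha$-conversion. Extended rules on $\Lambda_\bot$: $(\beta_v)$ $(\lambda x.M)V\to M\{x:=V\}$ if $V$ is a value (including $\bot$); $(\sigma_1)$ $(\lambda x.M)NP\to(\lambda x.MP)N$ if $x\notin\mathrm{FV}(P)$; $(\sigma_3)$ $V((\lambda x.M)N)\to(\lambda x.VM)N$ if $V$ is a value and $x\notin\mathrm{FV}(V)$; $\mathsf v$-reduction is the contextual closure of their union. Approximants $\mathcal A$ ($k\ge0$): $A::=B\mid C$; $B::=x\mid\lambda x.A\mid\bot\mid xBA_1\cdots A_k$; $C::=(\lambda x.A)(yBA_1\cdots A_k)$. *)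

(* Defs.v *)
(* Lambda-terms with a constant bot, up to alpha-conversion,
   represented with de Bruijn indices (so alpha-equivalence is syntactic equality). *)
From Stdlib Require Import Arith.

Inductive term : Type :=
| Bot : term
| Var : nat -> term
| Lam : term -> term
| App : term -> term -> term.

Definition is_value (t : term) : Prop :=
  match t with
  | Bot | Var _ | Lam _ => True
  | App _ _ => False
  end.

Fixpoint lift (k : nat) (t : term) : term :=
  match t with
  | Bot => Bot
  | Var n => if Nat.ltb n k then Var n else Var (S n)
  | Lam m => Lam (lift (S k) m)
  | App m n => App (lift k m) (lift k n)
  end.

Fixpoint subst (k : nat) (u : term) (t : term) : term :=
  match t with
  | Bot => Bot
  | Var n =>
      if Nat.ltb n k then Var n
      else if Nat.eqb n k then u
      else Var (pred n)
  | Lam m => Lam (subst (S k) (lift 0 u) m)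
  | App m n => App (subst k u m) (subst k u n)
  end.

Definition subst0 (u t : term) : term := subst 0 u t.

(* v-reduction: contextual closure of beta_v, sigma_1, sigma_3.
   Side conditions x notin FV(P), x notin FV(V) are realized by lifting
   P (resp. V) when it is moved under the binder. *)
Inductive vstep : term -> term -> Prop :=
| vs_beta : forall M V, is_value V ->
    vstep (App (Lam M) V) (subst0 V M)
| vs_sigma1 : forall M N P,
    vstep (App (App (Lam M) N) P) (App (Lam (App M (lift 0 P))) N)
| vs_sigma3 : forall V M N, is_value V ->
    vstep (App V (App (Lam M) N)) (App (Lam (App (lift 0 V) M)) N)
| vs_lam : forall M M', vstep M M' -> vstep (Lam M) (Lam M')
| vs_appl : forall M M' N, vstep M M' -> vstep (App M N) (App M' N)
| vs_appr : forall M N N', vstep N N' -> vstep (App M N) (App M N').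

(* Approximants:
   A ::= B | C
   B ::= x | \x.A | bot | x B A1 ... Ak   (k >= 0)
   C ::= (\x.A)(y B A1 ... Ak)
   is_H t  <->  t = x B A1 ... Ak for some variable x, B in B, A_i in A. *)
Inductive is_A : term -> Prop :=
| A_B : forall t, is_B t -> is_A t
| A_C : forall t, is_C t -> is_A t
with is_B : term -> Prop :=
| B_var : forall x, is_B (Var x)
| B_lam : forall a, is_A a -> is_B (Lam a)
| B_bot : is_B Bot
| B_head : forall t, is_H t -> is_B t
with is_C : term -> Prop :=
| C_redex : forall a h, is_A a -> is_H h -> is_C (App (Lam a) h)
with is_H : term -> Prop :=
| H_base : forall x b, is_B b -> is_H (App (Var x) b)
| H_app : forall h a, is_H h -> is_A a -> is_H (App h a).

Definition vnormal (t : term) : Prop := forall u, ~ vstep t u.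

(* Main.v *)
Require Import Defs.

Scheme isA_ind' := Induction for is_A Sort Prop
with isB_ind' := Induction for is_B Sort Prop
with isC_ind' := Induction for is_C Sort Prop
with isH_ind' := Induction for is_H Sort Prop.

Lemma H_shape : forall h, is_H h -> exists f a, h = App f a /\ (forall M, f <> Lam M).
Proof.
  intros h H; destruct H.
  - eexists; eexists; split; [reflexivity|]; discriminate.
  - inversion H; subst; eexists; eexists; split; try reflexivity; discriminate.
Qed.

Lemma B_shape : forall b, is_B b -> forall M N, b <> App (Lam M) N.
Proof.
  intros b H M N E; destruct H; try discriminate.
  destruct (H_shape _ H) as (f & a & E2 & Hf). subst. injection E2; intros; subst.
  eapply Hf; eauto.
Qed.

Lemma H_notval : forall h, is_H h -> ~ is_value h.
Proof. intros h H; destruct (H_shape _ H) as (f & a & -> & _); simpl; auto. Qed.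

Lemma H_notredex : forall h, is_H h -> forall M N, h <> App (Lam M) N.
Proof. intros h H M N E; destruct (H_shape _ H) as (f & a & E2 & Hf); subst.
  injection E2; intros; subst; eapply Hf; eauto. Qed.

Theorem lemma2p3 : forall A : term, is_A A -> vnormal A.
Proof.
  apply (isA_ind' (fun t _ => vnormal t) (fun t _ => vnormal t)
                  (fun t _ => vnormal t) (fun t _ => vnormal t)); unfold vnormal.
  - auto.
  - auto.
  - intros x u S; inversion S.
  - intros a Ha IH u S; inversion S; subst; eapply IH; eauto.
  - intros u S; inversion S.
  - auto.
  - intros a h Ha IHa Hh IHh u S; inversion S; subst.
    + eapply H_notval; eauto.
    + eapply H_notredex; eauto.
    + inversion H2; subst; eapply IHa; eauto.
    + eapply IHh; eauto.
  - intros x b Hb IHb u S; inversion S; subst.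
    + eapply B_shape; eauto.
    + inversion H2.
    + eapply IHb; eauto.
  - intros h a Hh IHh Ha IHa u S; inversion S; subst.
    all: try (eapply IHh; eauto; fail); try (eapply IHa; eauto; fail).
    all: try (eapply H_notredex; eauto; fail); try (eapply H_notval; eauto; fail).
    all: match goal with H : is_H (Lam _) |- _ => inversion H end.
Qed.
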